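(* Let $d\in\{1,2,3\}$ and let $G$ be a graph with a nonedge $f=uv$. Suppose there is an induced minor model $\{B_x\}$ of a $d$-forbidden graph in $G\cup f$ such that $u\in B_a$, $v\in B_b$ with $a\ne b$ and $f$ is the only edge of $G\cup f$ joining $B_a$ and $B_b$. Then $(G,f)$ does not have the $d$-SIP.
   Context: A linkage $(G,\ell)$: finite simple graph $G$ and $\ell:E(G)\to\mathbb{R}_{\ge0}$ (squared lengths). A $d$-realization is $p:V(G)\to\mathbb{R}^d$ with $\|p(x)-p(y)\|^2=\ell(xy)$ for all $xy\in E(G)$; $\mathcal{C}^d(G,\ell)$ is the set of these. For a nonedge $f=uv$, $\Omega^d_f(G,\ell)=\{\|p(u)-p(v)\|^2:p\in\mathcal{C}^d(G,\ell)\}$; $(G,f)$ has the $d$-SIP if $\Omega^d_f(G,\ell)$ is convex (empty or a closed interval) for every $\ell$. $G\cup f$ adds $f$ as an edge. An induced minor model of $M$ in $H$ is a partition $\{B_x\}_{x\in V(M)}$ of $V(H)$ into nonempty sets each inducing a connected subgraph such that $xy\in E(M)$ iff some edge of $H$ joins $B_x$ and $B_y$. The $d$-forbidden graphs are $K_3$ for $d=1$, $K_4$ for $d=2$, and $K_5$ and $K_{2,2,2}$ for $d=3$. *)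

(* Defs.v *)
From HB Require Import structures.
From mathcomp Require Import all_boot all_order all_algebra.
From mathcomp Require Import reals.
Set Implicit Arguments. Unset Strict Implicit. Unset Printing Implicit Defensive.
Import Order.TTheory GRing.Theory Num.Theory.
Local Open Scope ring_scope.

Section Defs.
Variable R : realType.

Definition sqdist (d : nat) (x y : 'rV[R]_d) : R :=
  \sum_(i < d) (x 0 i - y 0 i) ^+ 2.

Variable T : finType.

Definition realization (d : nat) (e : rel T) (l : T -> T -> R)
    (p : T -> 'rV[R]_d) : Prop :=
  forall x y, e x y -> sqdist (p x) (p y) = l x y.

Definition Omega (d : nat) (e : rel T) (l : T -> T -> R) (u v : T) (r : R) : Prop :=
  exists p : T -> 'rV[R]_d, realization e l p /\ r = sqdist (p u) (p v).

Definition convex_set (S : R -> Prop) : Prop :=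
  forall r1 r2 r, S r1 -> S r2 -> r1 <= r -> r <= r2 -> S r.

(* (G, f) has the d-SIP: Omega is convex for every squared-length assignment
   l : E(G) -> R_{>=0} (represented as a function symmetric and nonnegative
   on edges; its values on nonedges are irrelevant). *)
Definition has_SIP (d : nat) (e : rel T) (u v : T) : Prop :=
  forall l : T -> T -> R,
    (forall x y, e x y -> 0 <= l x y) ->
    (forall x y, e x y -> l x y = l y x) ->
    convex_set (Omega d e l u v).
End Defs.

Definition add_edge (T : eqType) (e : rel T) (u v : T) : rel T :=
  fun x y => [|| e x y, (x == u) && (y == v) | (x == v) && (y == u)].

Definition induced_connected (T : finType) (e : rel T) (A : {set T}) : Prop :=
  forall a b, a \in A -> b \in A ->
    connect (fun x y => [&& e x y, x \in A & y \in A]) a b.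

Definition induced_minor_model (S T : finType) (eM : rel S) (e : rel T)
    (B : S -> {set T}) : Prop :=
  [/\ (forall x, B x != set0),
      (forall x y, x != y -> [disjoint B x & B y]),
      (forall t : T, exists x, t \in B x),
      (forall x, induced_connected e (B x)) &
      (forall x y, x != y ->
         (eM x y <-> exists s t, [/\ s \in B x, t \in B y & e s t]))].

(* (n, eM) is (a labelled copy of) a d-forbidden graph:
   K_3 (d=1), K_4 (d=2), K_5 or K_{2,2,2} (d=3). *)
Definition d_forbidden (d n : nat) (eM : rel 'I_n) : Prop :=
  [\/ [/\ d = 1%N, n = 3%N & forall i j, eM i j = (i != j)],
      [/\ d = 2%N, n = 4%N & forall i j, eM i j = (i != j)],
      [/\ d = 3%N, n = 5%N & forall i j, eM i j = (i != j)] |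
      [/\ d = 3%N, n = 6%N &
          forall i j, eM i j = (i != j) && ((i %/ 2)%N != (j %/ 2)%N)]].

(* Main.v *)
Require Import Defs.
From HB Require Import structures.
From mathcomp Require Import all_boot all_order all_algebra.
From mathcomp Require Import reals.
From mathcomp Require Import ring lra zify.
Import Order.TTheory GRing.Theory Num.Theory.
Local Open Scope ring_scope.


Section Gen.
Variable R : realType.

Lemma sqdist_sym d (x y : 'rV[R]_d) : sqdist x y = sqdist y x.
Proof. by apply: eq_bigr => i _; rewrite -opprB sqrrN. Qed.

Lemma sqdistxx d (x : 'rV[R]_d) : sqdist x x = 0.
Proof. by apply: big1 => i _; rewrite subrr expr0n. Qed.

Lemma sqdist_ge0 d (x y : 'rV[R]_d) : 0 <= sqdist x y.
Proof. by apply: sumr_ge0 => i _; exact: sqr_ge0. Qed.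

Lemma sqdist_eq0 d (x y : 'rV[R]_d) : sqdist x y = 0 -> x = y.
Proof.
move=> h; apply/rowP => i.
have H0 : forall j : 'I_d, true -> (x 0 j - y 0 j)^+2 = 0.
  by apply: psumr_eq0P h => j _; exact: sqr_ge0.
by move: (H0 i isT) => /eqP; rewrite sqrf_eq0 subr_eq0 => /eqP.
Qed.

Lemma connect_const (T : finType) (r : rel T) (A : Type) (f : T -> A) s t :
  (forall x y, r x y -> f x = f y) -> connect r s t -> f s = f t.
Proof.
move=> H /connectP [p pth ->]; elim: p s pth => //= y p IH s /andP[h1 h2].
by rewrite (H _ _ h1); exact: IH.
Qed.

Lemma reduce (d : nat) (T : finType) (e : rel T) (u v : T) (n : nat)
  (eM : rel 'I_n) (B : 'I_n -> {set T}) (a b : 'I_n) (q1 q2 : 'I_n -> 'rV[R]_d)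
  (r1 r2 r : R) :
  symmetric e -> ~~ e u v ->
  induced_minor_model eM (add_edge e u v) B ->
  u \in B a -> v \in B b -> a != b ->
  (forall x y, x \in B a -> y \in B b -> add_edge e u v x y -> (x == u) && (y == v)) ->
  (forall x y, x != y -> eM x y -> ~~ ((x == a) && (y == b)) -> ~~ ((x == b) && (y == a)) ->
      sqdist (q2 x) (q2 y) = sqdist (q1 x) (q1 y)) ->
  sqdist (q1 a) (q1 b) = r1 -> sqdist (q2 a) (q2 b) = r2 -> r1 <= r -> r <= r2 ->
  (forall q : 'I_n -> 'rV[R]_d,
     (forall x y, x != y -> eM x y -> ~~ ((x == a) && (y == b)) -> ~~ ((x == b) && (y == a)) ->
        sqdist (q x) (q y) = sqdist (q1 x) (q1 y)) -> sqdist (q a) (q b) != r) ->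
  ~ has_SIP R d e u v.
Proof.
move=> esym neuv [Hne Hdisj Hcov Hconn Hedge] ua vb nab only R12 E1 E2 le1 le2 Rig HS.
pose blk t := odflt a [pick x | t \in B x].
have blkP t : t \in B (blk t).
  rewrite /blk; case: pickP => [x Hx //|H].
  by case: (Hcov t) => x Hx; move: (H x); rewrite Hx.
have blkU t x : t \in B x -> blk t = x.
  move=> Hx; apply/eqP; apply: contraT => hne.
  by move: (disjointFr (Hdisj _ _ hne) (blkP t)); rewrite Hx.
have bu : blk u = a by apply: blkU.
have bv : blk v = b by apply: blkU.
have notf s t : add_edge e u v s t -> ~~ ((blk s == a) && (blk t == b)) ->
      ~~ ((blk s == b) && (blk t == a)) -> e s t.
  rewrite /add_edge => /or3P [//| /andP[/eqP su /eqP tv] | /andP[/eqP sv /eqP tu]].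
    by rewrite su tv bu bv !eqxx.
  by rewrite sv tu bu bv !eqxx andbT.
pose l s t := sqdist (q1 (blk s)) (q1 (blk t)).
have Hc := HS l (fun x y _ => sqdist_ge0 _ _ _) (fun x y _ => sqdist_sym _ _ _).
have O1 : Omega d e l u v r1.
  exists (fun t => q1 (blk t)); split => //; by rewrite bu bv.
have O2 : Omega d e l u v r2.
  exists (fun t => q2 (blk t)); split; last by rewrite bu bv.
  move=> s t est; rewrite /l.
  have [bst|bst] := eqVneq (blk s) (blk t).
    by rewrite bst !sqdistxx.
  apply: R12 => //.
  - apply/(Hedge _ _ bst); exists s, t; split => //; try exact: blkP.
    by rewrite /add_edge est.
  - apply/negP => /andP[/eqP bsa /eqP btb].
    have := only s t; rewrite -bsa -btb !blkP /add_edge est => /(_ isT isT isT).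
    by case/andP => /eqP su /eqP tv; move: est; rewrite su tv (negbTE neuv).
  - apply/negP => /andP[/eqP bsb /eqP bta].
    have := only t s; rewrite -bsb -bta !blkP /add_edge (esym t s) est.
    move=> /(_ isT isT isT) /andP[/eqP tu /eqP sv].
    by move: est; rewrite tu sv esym (negbTE neuv).
have [p [preal rE]] := Hc _ _ _ O1 O2 le1 le2.
have pconst x s t : s \in B x -> t \in B x -> p s = p t.
  move=> sx tx; apply: (@connect_const _ _ _ p s t _ (Hconn x s t sx tx)).
  move=> y z /and3P [eyz yx zx].
  have by_ := blkU _ _ yx; have bz := blkU _ _ zx.
  have eyz' : e y z.
    apply: notf => //; rewrite by_ bz; apply/negP => /andP[/eqP xa /eqP xb];
    by move: nab; rewrite -xa -xb eqxx.
  by apply: sqdist_eq0; rewrite preal // /l by_ bz sqdistxx.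
pose q x := p (odflt u [pick t in B x]).
have qE t : q (blk t) = p t.
  rewrite /q; case: pickP => [t' Ht'|H] /=; first exact: pconst Ht' (blkP t).
  by move: (H t); rewrite blkP.
suff Hq : forall x y, x != y -> eM x y -> ~~ ((x == a) && (y == b)) -> ~~ ((x == b) && (y == a)) ->
        sqdist (q x) (q y) = sqdist (q1 x) (q1 y).
  by move: (Rig q Hq); rewrite -bu -bv !qE -rE eqxx.
move=> x y xy eMxy nab1 nab2.
have [s [t [sx ty est]]] := (Hedge _ _ xy).1 eMxy.
have bs := blkU _ _ sx; have bt := blkU _ _ ty.
have est' : e s t by apply: notf; rewrite ?bs ?bt.
by rewrite -bs -bt !qE preal.
Qed.

Lemma neg_ok d (j : 'I_d) (w : 'rV[R]_d) : w 0 j = 0 ->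
  sqdist (- delta_mx 0 j) w = sqdist (delta_mx 0 j) w.
Proof.
move=> wj; apply: eq_bigr => k _; rewrite !mxE eqxx /=.
by case: eqP => [->|_]; rewrite ?wj /=; ring.
Qed.

Lemma dist4 d (j : 'I_d) : sqdist (delta_mx 0 j : 'rV[R]_d) (- delta_mx 0 j) = 4.
Proof.
rewrite /sqdist (bigD1 j) //= big1 ?addr0 => [|k kj]; rewrite !mxE eqxx /=.
  by rewrite eqxx /=; ring.
by rewrite (negbTE kj) /=; ring.
Qed.

Lemma reduce2 (d : nat) (T : finType) (e : rel T) (u v : T) (n : nat)
  (eM : rel 'I_n) (B : 'I_n -> {set T}) (a b : 'I_n) (j : 'I_d) (pos : 'I_n -> 'rV[R]_d) :
  symmetric e -> ~~ e u v ->
  induced_minor_model eM (add_edge e u v) B ->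
  u \in B a -> v \in B b -> a != b ->
  (forall x y, x \in B a -> y \in B b -> add_edge e u v x y -> (x == u) && (y == v)) ->
  (forall x, pos x 0 j = 0) ->
  (forall q : 'I_n -> 'rV[R]_d,
     (forall x y, x != y -> eM x y -> ~~ ((x == a) && (y == b)) -> ~~ ((x == b) && (y == a)) ->
        sqdist (q x) (q y) = sqdist ((fun z => if (z == a) || (z == b) then delta_mx 0 j else pos z) x)
                                    ((fun z => if (z == a) || (z == b) then delta_mx 0 j else pos z) y)) ->
     sqdist (q a) (q b) != 1) ->
  ~ has_SIP R d e u v.
Proof.
move=> es nuv mm ua vb nab only posj Rig.
pose q1 := fun z => if (z == a) || (z == b) then delta_mx 0 j else pos z.
pose q2 := fun z => if z == b then - delta_mx 0 j else q1 z.
apply: (@reduce d T e u v n eM B a b q1 q2 0 4 1) => //.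
- move=> x y xy _ h1 h2; rewrite /q2.
  have [xb|xb] := eqVneq x b; have [yb|yb] := eqVneq y b.
  + by move: xy; rewrite xb yb eqxx.
  + have ya : y != a by move: h2; rewrite xb eqxx.
    rewrite /q1 xb eqxx orbT (negbTE ya) (negbTE yb) /=.
    exact: neg_ok.
  + have xa : x != a by move: h1; rewrite yb eqxx andbT.
    rewrite /q1 yb eqxx orbT (negbTE xa) (negbTE xb) /=.
    by rewrite sqdist_sym neg_ok // sqdist_sym.
  + by [].
- by rewrite /q1 !eqxx orbT sqdistxx.
- by rewrite /q2 (negbTE nab) eqxx /q1 eqxx /= dist4.
- lra.
Qed.

Definition i0 : 'I_3 := @Ordinal 3 0 isT.
Definition i1 : 'I_3 := @Ordinal 3 1 isT.
Definition i2 : 'I_3 := @Ordinal 3 2 isT.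

Lemma sqdist3 (x y : 'rV[R]_3) : sqdist x y =
  (x 0 i0 - y 0 i0)^+2 + (x 0 i1 - y 0 i1)^+2 + (x 0 i2 - y 0 i2)^+2.
Proof.
rewrite /sqdist !big_ord_recl big_ord0 addr0 addrA.
have -> : lift ord0 (lift ord0 ord0) = i2 by apply: val_inj.
have -> : lift ord0 ord0 = i1 by apply: val_inj.
have -> : ord0 = i0 by apply: val_inj.
by [].
Qed.

Lemma core3 (x1 x2 x3 z1 z2 z3 y1 y2 y3 w1 w2 w3 : R) :
  x1^+2 + x2^+2 + x3^+2 = 1 -> z1^+2 + z2^+2 + z3^+2 = 1 ->
  y1^+2 + y2^+2 + y3^+2 = 1 -> w1^+2 + w2^+2 + w3^+2 = 1 ->
  x1*y1 + x2*y2 + x3*y3 = 0 -> x1*w1 + x2*w2 + x3*w3 = 0 ->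
  z1*y1 + z2*y2 + z3*y3 = 0 -> z1*w1 + z2*w2 + z3*w3 = 0 ->
  y1*w1 + y2*w2 + y3*w3 = 0 ->
  (x1*z1 + x2*z2 + x3*z3)^+2 = 1.
Proof.
move=> hx hz hy hw hxy hxw hzy hzw hyw.
set Dx := x1*(y2*w3 - y3*w2) - x2*(y1*w3 - y3*w1) + x3*(y1*w2 - y2*w1).
set Dz := z1*(y2*w3 - y3*w2) - z2*(y1*w3 - y3*w1) + z3*(y1*w2 - y2*w1).
set xx := x1^+2 + x2^+2 + x3^+2.
set zz := z1^+2 + z2^+2 + z3^+2.
set yy := y1^+2 + y2^+2 + y3^+2.
set ww := w1^+2 + w2^+2 + w3^+2.
set xy := x1*y1 + x2*y2 + x3*y3.
set xw := x1*w1 + x2*w2 + x3*w3.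
set zy := z1*y1 + z2*y2 + z3*y3.
set zw := z1*w1 + z2*w2 + z3*w3.
set yw := y1*w1 + y2*w2 + y3*w3.
set xz := x1*z1 + x2*z2 + x3*z3.
have e1 : Dx * Dz = xz * (yy * ww - yw * yw) - xy * (zy * ww - yw * zw) + xw * (zy * yw - yy * zw).
  rewrite /Dx /Dz /xz /yy /ww /yw /xy /zy /zw /xw; ring.
have e2 : Dx * Dx = xx * (yy * ww - yw * yw) - xy * (xy * ww - yw * xw) + xw * (xy * yw - yy * xw).
  rewrite /Dx /xx /yy /ww /yw /xy /xw; ring.
have e3 : Dz * Dz = zz * (yy * ww - yw * yw) - zy * (zy * ww - yw * zw) + zw * (zy * yw - yy * zw).
  rewrite /Dz /zz /yy /ww /yw /zy /zw; ring.
rewrite /xx /zz /yy /ww /xy /xw /zy /zw /yw in e1 e2 e3.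
rewrite hx hz hy hw hxy hxw hzy hzw hyw in e1 e2 e3.
have -> : xz = Dx * Dz by rewrite e1; ring.
have : (Dx * Dz)^+2 = (Dx*Dx)*(Dz*Dz) by ring.
by rewrite e2 e3 => ->; ring.
Qed.

Lemma rigK5 (qa qb q0 q1 q2 : 'rV[R]_3) :
  sqdist qa q0 = 1 -> sqdist qa q1 = 2 -> sqdist qa q2 = 2 ->
  sqdist qb q0 = 1 -> sqdist qb q1 = 2 -> sqdist qb q2 = 2 ->
  sqdist q1 q0 = 1 -> sqdist q2 q0 = 1 -> sqdist q1 q2 = 2 ->
  sqdist qa qb != 1.
Proof.
rewrite !sqdist3.
move: (qa 0 i0) (qa 0 i1) (qa 0 i2) (qb 0 i0) (qb 0 i1) (qb 0 i2)
      (q0 0 i0) (q0 0 i1) (q0 0 i2) (q1 0 i0) (q1 0 i1) (q1 0 i2)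
      (q2 0 i0) (q2 0 i1) (q2 0 i2) => a1 a2 a3 b1 b2 b3 o1 o2 o3 c1 c2 c3 d1 d2 d3.
move=> h1 h2 h3 h4 h5 h6 h7 h8 h9; apply/eqP => hab.
have := core3 (a1 - o1) (a2 - o2) (a3 - o3) (b1 - o1) (b2 - o2) (b3 - o3)
   (c1 - o1) (c2 - o2) (c3 - o3) (d1 - o1) (d2 - o2) (d3 - o3).
move=> /(_ h1 h4 h7 h8) H.
have := H ltac:(lra) ltac:(lra) ltac:(lra) ltac:(lra) ltac:(lra).
have -> : (a1 - o1) * (b1 - o1) + (a2 - o2) * (b2 - o2) + (a3 - o3) * (b3 - o3) = 1/2 by lra.
lra.
Qed.

Lemma rigOct (qa qb qa' qb' qc1 qc2 : 'rV[R]_3) :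
  sqdist qa qc1 = 1 -> sqdist qa qb' = 2 -> sqdist qa qc2 = 2 ->
  sqdist qb qc1 = 1 -> sqdist qb qa' = 2 -> sqdist qb qc2 = 2 ->
  sqdist qa' qb' = 4 -> sqdist qa' qc1 = 1 -> sqdist qb' qc1 = 1 ->
  sqdist qa' qc2 = 2 -> sqdist qb' qc2 = 2 ->
  sqdist qa qb != 1.
Proof.
rewrite !sqdist3.
move: (qa 0 i0) (qa 0 i1) (qa 0 i2) (qb 0 i0) (qb 0 i1) (qb 0 i2)
      (qa' 0 i0) (qa' 0 i1) (qa' 0 i2) (qb' 0 i0) (qb' 0 i1) (qb' 0 i2)
      (qc1 0 i0) (qc1 0 i1) (qc1 0 i2) (qc2 0 i0) (qc2 0 i1) (qc2 0 i2)
  => a1 a2 a3 b1 b2 b3 p1 p2 p3 k1 k2 k3 o1 o2 o3 d1 d2 d3.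
move=> h1 h2 h3 h4 h5 h6 h7 h8 h9 h10 h11; apply/eqP => hab.
have hs : (p1 + k1 - 2 * o1)^+2 + (p2 + k2 - 2 * o2)^+2 + (p3 + k3 - 2 * o3)^+2 = 0 by lra.
have s1 := sqr_ge0 (p1 + k1 - 2 * o1).
have s2 := sqr_ge0 (p2 + k2 - 2 * o2).
have s3 := sqr_ge0 (p3 + k3 - 2 * o3).
have t1 : (p1 + k1 - 2 * o1)^+2 = 0 by lra.
have t2 : (p2 + k2 - 2 * o2)^+2 = 0 by lra.
have t3 : (p3 + k3 - 2 * o3)^+2 = 0 by lra.
move: t1 t2 t3 => /eqP + /eqP + /eqP; rewrite !sqrf_eq0 !subr_eq0 => /eqP t1 /eqP t2 /eqP t3.
have e1 : p1 = 2 * o1 - k1 by lra.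
have e2 : p2 = 2 * o2 - k2 by lra.
have e3 : p3 = 2 * o3 - k3 by lra.
rewrite e1 e2 e3 in h5 h7 h8 h10.
have := core3 (a1 - o1) (a2 - o2) (a3 - o3) (b1 - o1) (b2 - o2) (b3 - o3)
   (k1 - o1) (k2 - o2) (k3 - o3) (d1 - o1) (d2 - o2) (d3 - o3).
move=> /(_ h1 h4 h9) H.
have := H ltac:(lra) ltac:(lra) ltac:(lra) ltac:(lra) ltac:(lra) ltac:(lra).
have -> : (a1 - o1) * (b1 - o1) + (a2 - o2) * (b2 - o2) + (a3 - o3) * (b3 - o3) = 1/2 by lra.
lra.
Qed.

Lemma sqdist2 (x y : 'rV[R]_2) : sqdist x y =
  (x 0 ord0 - y 0 ord0)^+2 + (x 0 ord_max - y 0 ord_max)^+2.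
Proof.
rewrite /sqdist !big_ord_recl big_ord0 addr0.
by have -> : lift ord0 ord0 = ord_max :> 'I_2 by apply: val_inj.
Qed.

Lemma sqdist1 (x y : 'rV[R]_1) : sqdist x y = (x 0 ord0 - y 0 ord0)^+2.
Proof. by rewrite /sqdist big_ord_recl big_ord0 addr0. Qed.

Lemma rigK4 (qa qb q0 q1 : 'rV[R]_2) :
  sqdist qa q0 = 1 -> sqdist qa q1 = 2 ->
  sqdist qb q0 = 1 -> sqdist qb q1 = 2 -> sqdist q1 q0 = 1 ->
  sqdist qa qb != 1.
Proof.
rewrite !sqdist2.
move: (qa 0 ord0) (qa 0 ord_max) (qb 0 ord0) (qb 0 ord_max)
      (q0 0 ord0) (q0 0 ord_max) (q1 0 ord0) (q1 0 ord_max)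
  => a1 a2 b1 b2 o1 o2 c1 c2.
move=> h1 h2 h4 h5 h7; apply/eqP => hab.
have := core3 (a1 - o1) (a2 - o2) 0 (b1 - o1) (b2 - o2) 0
   (c1 - o1) (c2 - o2) 0 0 0 1.
move=> H.
have := H ltac:(lra) ltac:(lra) ltac:(lra) ltac:(lra) ltac:(lra) ltac:(lra) ltac:(lra) ltac:(lra) ltac:(lra).
have -> : (a1 - o1) * (b1 - o1) + (a2 - o2) * (b2 - o2) + 0 * 0 = 1/2 by lra.
lra.
Qed.

Lemma rigK3 (qa qb q0 : 'rV[R]_1) :
  sqdist qa q0 = 1 -> sqdist qb q0 = 1 -> sqdist qa qb != 1.
Proof.
rewrite !sqdist1.
move: (qa 0 ord0) (qb 0 ord0) (q0 0 ord0) => a1 b1 o1.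
move=> h1 h2; apply/eqP => hab; nra.
Qed.

Lemma other n (s : seq 'I_n) : (size s < n)%N -> exists c, c \notin s.
Proof.
move=> hs; apply/existsP; apply: contraLR hs; rewrite negb_exists -leqNgt => /forallP H.
have : (#|'I_n| <= size s)%N.
  apply: leq_trans (card_size s); apply: subset_leq_card; apply/subsetP => x _.
  by move: (H x); rewrite negbK.
by rewrite card_ord.
Qed.

End Gen.


Section G2.
Variable R : realType.
Lemma sq_e0 d (j : 'I_d) : sqdist ('e_j : 'rV[R]_d) 0 = 1.
Proof.
rewrite /sqdist (bigD1 j) //= big1 ?addr0 => [|k kj]; rewrite !mxE eqxx /=.
  by rewrite eqxx /=; ring.
by rewrite (negbTE kj) /=; ring.
Qed.

Lemma sq_ee d (i k : 'I_d) : i != k -> sqdist ('e_i : 'rV[R]_d) 'e_k = 2.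
Proof.
move=> ik; rewrite /sqdist (bigD1 i) // (bigD1 k) 1?eq_sym //= big1 ?addr0 => [|l /andP[li lk]];
  rewrite !mxE ?eqxx /=.
  by rewrite (negbTE ik) eq_sym (negbTE ik) /=; ring.
by rewrite (negbTE li) (negbTE lk) /=; ring.
Qed.

Lemma sq_en d (i k : 'I_d) : i != k -> sqdist ('e_i : 'rV[R]_d) (- 'e_k) = 2.
Proof.
move=> ik; rewrite /sqdist (bigD1 i) // (bigD1 k) 1?eq_sym //= big1 ?addr0 => [|l /andP[li lk]];
  rewrite !mxE ?eqxx /=.
  by rewrite (negbTE ik) eq_sym (negbTE ik) /=; ring.
by rewrite (negbTE li) (negbTE lk) /=; ring.
Qed.

Lemma sq_n0 d (j : 'I_d) : sqdist (- 'e_j : 'rV[R]_d) 0 = 1.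
Proof.
rewrite /sqdist (bigD1 j) //= big1 ?addr0 => [|k kj]; rewrite !mxE eqxx /=.
  by rewrite eqxx /=; ring.
by rewrite (negbTE kj) /=; ring.
Qed.

Lemma sq_ne d (j : 'I_d) : sqdist (- 'e_j : 'rV[R]_d) 'e_j = 4.
Proof. by rewrite sqdist_sym dist4. Qed.
End G2.


Lemma neqF {X : eqType} {x y : X} : x != y -> ((x == y) = false) * ((y == x) = false).
Proof. by move=> h; split; [exact: negbTE | rewrite eq_sym; exact: negbTE]. Qed.

Section G3.
Variable R : realType.

Lemma caseK3 (T : finType) (e : rel T) u v (eM : rel 'I_3) (B : 'I_3 -> {set T}) a b :
  symmetric e -> ~~ e u v -> induced_minor_model eM (add_edge e u v) B ->
  u \in B a -> v \in B b -> a != b ->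
  (forall x y, x \in B a -> y \in B b -> add_edge e u v x y -> (x == u) && (y == v)) ->
  (forall i j, eM i j = (i != j)) -> ~ has_SIP R 1 e u v.
Proof.
move=> es nuv mm ua vb nab only HeM.
have [c] := @other 3 [:: a; b] isT; rewrite !inE negb_or => /andP[ca cb].
have ac : a != c by rewrite eq_sym.
have bc : b != c by rewrite eq_sym.
have ba : b != a by rewrite eq_sym.
have F := (negbTE nab, negbTE ba, negbTE ca, negbTE cb, negbTE ac, negbTE bc).
apply: (@reduce2 R 1 T e u v 3 eM B a b ord0 (fun _ => 0)) => //.
  by move=> x; rewrite mxE.
move=> q Hq.
apply: (@rigK3 R (q a) (q b) (q c)).
  by rewrite Hq ?HeM; rewrite ?eqxx ?F //= ?sq_e0.
by rewrite Hq ?HeM; rewrite ?eqxx ?F //= ?sq_e0.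
Qed.

Lemma caseK4 (T : finType) (e : rel T) u v (eM : rel 'I_4) (B : 'I_4 -> {set T}) a b :
  symmetric e -> ~~ e u v -> induced_minor_model eM (add_edge e u v) B ->
  u \in B a -> v \in B b -> a != b ->
  (forall x y, x \in B a -> y \in B b -> add_edge e u v x y -> (x == u) && (y == v)) ->
  (forall i j, eM i j = (i != j)) -> ~ has_SIP R 2 e u v.
Proof.
move=> es nuv mm ua vb nab only HeM.
have [c] := @other 4 [:: a; b] isT; rewrite !inE negb_or => /andP[ca cb].
have [d] := @other 4 [:: a; b; c] isT; rewrite !inE !negb_or => /and3P[da db dc].
have F := (neqF nab, neqF ca, neqF cb, neqF da, neqF db, neqF dc).
apply: (@reduce2 R 2 T e u v 4 eM B a b ord_max (fun x => if x == d then 'e_ord0 else 0)) => //.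
  by move=> x; case: (x == d); rewrite !mxE.
move=> q Hq.
apply: (@rigK4 R (q a) (q b) (q c) (q d));
  by rewrite Hq ?HeM; rewrite ?eqxx ?F //= ?sq_e0 ?sq_ee.
Qed.

Lemma caseK5 (T : finType) (e : rel T) u v (eM : rel 'I_5) (B : 'I_5 -> {set T}) a b :
  symmetric e -> ~~ e u v -> induced_minor_model eM (add_edge e u v) B ->
  u \in B a -> v \in B b -> a != b ->
  (forall x y, x \in B a -> y \in B b -> add_edge e u v x y -> (x == u) && (y == v)) ->
  (forall i j, eM i j = (i != j)) -> ~ has_SIP R 3 e u v.
Proof.
move=> es nuv mm ua vb nab only HeM.
have [c] := @other 5 [:: a; b] isT; rewrite !inE negb_or => /andP[ca cb].
have [d] := @other 5 [:: a; b; c] isT; rewrite !inE !negb_or => /and3P[da db dc].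
have [f] := @other 5 [:: a; b; c; d] isT; rewrite !inE !negb_or => /and4P[fa fb fc fd].
have F := (neqF nab, neqF ca, neqF cb, neqF da, neqF db, neqF dc,
           neqF fa, neqF fb, neqF fc, neqF fd).
apply: (@reduce2 R 3 T e u v 5 eM B a b i2
   (fun x => if x == d then 'e_i0 else if x == f then 'e_i1 else 0)) => //.
  by move=> x; case: (x == d); case: (x == f); rewrite !mxE.
move=> q Hq.
apply: (@rigK5 R (q a) (q b) (q c) (q d) (q f));
  by rewrite Hq ?HeM; rewrite ?eqxx ?F //= ?sq_e0 ?sq_ee.
Qed.
End G3.


Section G4.
Variable R : realType.

Lemma sq_ne2 d (i k : 'I_d) : i != k -> sqdist (- 'e_i : 'rV[R]_d) 'e_k = 2.
Proof. by move=> ik; rewrite sqdist_sym sq_en // eq_sym. Qed.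

Lemma caseOct (T : finType) (e : rel T) u v (eM : rel 'I_6) (B : 'I_6 -> {set T}) a b :
  symmetric e -> ~~ e u v -> induced_minor_model eM (add_edge e u v) B ->
  u \in B a -> v \in B b -> a != b ->
  (forall x y, x \in B a -> y \in B b -> add_edge e u v x y -> (x == u) && (y == v)) ->
  (forall i j, eM i j = (i != j) && ((i %/ 2)%N != (j %/ 2)%N)) -> ~ has_SIP R 3 e u v.
Proof.
move=> es nuv mm ua vb nab only HeM.
have eab : eM a b.
  case: mm => _ _ _ _ He; apply/(He a b nab); exists u, v; split => //.
  by rewrite /add_edge !eqxx /= orbT.
move: eab; rewrite HeM => /andP[_ /eqP hp].
have hA := ltn_ord a; have hB := ltn_ord b.
pose ap : 'I_6 := inord (a + 1 - 2 * (a %% 2)).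
pose bp : 'I_6 := inord (b + 1 - 2 * (b %% 2)).
pose c1 : 'I_6 := inord (2 * (3 - a %/ 2 - b %/ 2)).
pose c2 : 'I_6 := inord (2 * (3 - a %/ 2 - b %/ 2) + 1).
have vap : (ap : nat) = (a + 1 - 2 * (a %% 2))%N by rewrite inordK //; lia.
have vbp : (bp : nat) = (b + 1 - 2 * (b %% 2))%N by rewrite inordK //; lia.
have vc1 : (c1 : nat) = (2 * (3 - a %/ 2 - b %/ 2))%N by rewrite inordK //; lia.
have vc2 : (c2 : nat) = (2 * (3 - a %/ 2 - b %/ 2) + 1)%N by rewrite inordK //; lia.
have qap : (ap %/ 2)%N = (a %/ 2)%N by rewrite vap; lia.
have qbp : (bp %/ 2)%N = (b %/ 2)%N by rewrite vbp; lia.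
have qc1 : (c1 %/ 2)%N = (3 - a %/ 2 - b %/ 2)%N by rewrite vc1; lia.
have qc2 : (c2 %/ 2)%N = (3 - a %/ 2 - b %/ 2)%N by rewrite vc2; lia.
have da := divn_eq a 2; have ma : (a %% 2 < 2)%N := ltn_pmod a (isT : (0 < 2)%N).
have db := divn_eq b 2; have mb : (b %% 2 < 2)%N := ltn_pmod b (isT : (0 < 2)%N).
have pa3 : (a %/ 2 < 3)%N by rewrite ltn_divLR.
have pb3 : (b %/ 2 < 3)%N by rewrite ltn_divLR.
clearbody ap bp c1 c2.
move: (a %/ 2)%N (a %% 2)%N (b %/ 2)%N (b %% 2)%N da ma db mb pa3 pb3 qap qbp qc1 qc2 vap vbp vc1 vc2 hp
  => pa ra pb rb da ma db mb pa3 pb3 qap qbp qc1 qc2 vap vbp vc1 vc2 hp.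
have NNp : ((a %/ 2)%N != (c1 %/ 2)%N) * ((a %/ 2)%N != (bp %/ 2)%N) * ((a %/ 2)%N != (c2 %/ 2)%N) * ((b %/ 2)%N != (c1 %/ 2)%N) * ((b %/ 2)%N != (ap %/ 2)%N) * ((b %/ 2)%N != (c2 %/ 2)%N) * ((ap %/ 2)%N != (bp %/ 2)%N) * ((ap %/ 2)%N != (c1 %/ 2)%N) * ((bp %/ 2)%N != (c1 %/ 2)%N) * ((ap %/ 2)%N != (c2 %/ 2)%N) * ((bp %/ 2)%N != (c2 %/ 2)%N).
  by repeat split; apply/eqP; rewrite ?qap ?qbp ?qc1 ?qc2; clear qap qbp qc1 qc2; lia.
have NNn : (a != b) * (a != ap) * (a != bp) * (a != c1) * (a != c2) * (b != ap) * (b != bp) * (b != c1) * (b != c2) * (ap != bp) * (ap != c1) * (ap != c2) * (bp != c1) * (bp != c2) * (c1 != c2).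
  by repeat split; apply/eqP => /(congr1 (@nat_of_ord 6)); rewrite ?vap ?vbp ?vc1 ?vc2; clear qap qbp qc1 qc2; lia.
case: NNp => [[[[[[[[[[Pac1 Pabp] Pac2] Pbc1] Pbap] Pbc2] Papbp] Papc1] Pbpc1] Papc2] Pbpc2].
case: NNn => [[[[[[[[[[[[[[Nab Naap] Nabp] Nac1] Nac2] Nbap] Nbbp] Nbc1] Nbc2] Napbp] Napc1] Napc2] Nbpc1] Nbpc2] Nc1c2].
have F := (neqF Nab, neqF Naap, neqF Nabp, neqF Nac1, neqF Nac2, neqF Nbap, neqF Nbbp, neqF Nbc1, neqF Nbc2, neqF Napbp, neqF Napc1, neqF Napc2, neqF Nbpc1, neqF Nbpc2, neqF Nc1c2).
have P := (neqF Pac1, neqF Pabp, neqF Pac2, neqF Pbc1, neqF Pbap, neqF Pbc2, neqF Papbp, neqF Papc1, neqF Pbpc1, neqF Papc2, neqF Pbpc2).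
apply: (@reduce2 R 3 T e u v 6 eM B a b i1
   (fun x => if x == ap then - 'e_i2 else if x == bp then 'e_i2 else if x == c2 then 'e_i0 else 0)) => //.
  by move=> x; case: (x == ap); case: (x == bp); case: (x == c2); rewrite !mxE /= ?oppr0.
move=> q Hq.
apply: (@rigOct R (q a) (q b) (q ap) (q bp) (q c1) (q c2));
  by rewrite Hq ?HeM; rewrite ?eqxx ?F ?P //= ?sq_e0 ?sq_ee ?sq_en ?sq_n0 ?sq_ne ?sq_ne2.
Qed.
End G4.

Theorem mainTheorem10 (R : realType) (d : nat) (T : finType) (e : rel T) (u v : T) :
  (d \in [:: 1%N; 2%N; 3%N]) ->
  symmetric e -> irreflexive e ->
  u != v -> ~~ e u v ->
  (exists (n : nat) (eM : rel 'I_n) (B : 'I_n -> {set T}) (a b : 'I_n),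
      [/\ d_forbidden d eM,
          induced_minor_model eM (add_edge e u v) B,
          [/\ u \in B a, v \in B b & a != b] &
          (forall x y, x \in B a -> y \in B b -> add_edge e u v x y ->
             (x == u) && (y == v))]) ->
  ~ has_SIP R d e u v.
Proof.
move=> dIn es eirr uv nuv [n [eM [B [a [b [Hf Hmm [ua vb nab] only]]]]]].
case: Hf => [[dE nE HeM]|[dE nE HeM]|[dE nE HeM]|[dE nE HeM]]; subst d n.
- exact: (@caseK3 R T e u v eM B a b es nuv Hmm ua vb nab only HeM).
- exact: (@caseK4 R T e u v eM B a b es nuv Hmm ua vb nab only HeM).
- exact: (@caseK5 R T e u v eM B a b es nuv Hmm ua vb nab only HeM).
- exact: (@caseOct R T e u v eM B a b es nuv Hmm ua vb nab only HeM).
Qed.
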